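(* Let $\mathsf{C}$ be a depth-$D$ Clifford circuit on $n$ qubits consisting only of one- and two-qubit Clifford unitaries, and let $F$ be local stochastic Pauli noise of strength $p$ on $\mathsf{C}$. Then there is local stochastic Pauli noise $F'$ on $\mathsf{C}$ of strength $$p'=D\cdot\big(2p^{2^{-(D-1)}}\big)^{1/D}$$ such that (i) $\mathrm{supp}(F')\subseteq\{D\}\times[n]$ and (ii) $F\bowtie\mathsf{C}=F'\bowtie\mathsf{C}$.
   Context: Wires of a depth-$D$ circuit on $n$ qubits: $\mathcal{W}_{\mathsf{C}}=[D]\times[n]$, with $(t,j)$ representing qubit $j$ after layer $t$. Local stochastic Pauli noise of strength $p$: a random function $F:\mathcal{W}_{\mathsf{C}}\to\mathcal{P}_1$ (single-qubit Paulis) with $\Pr[W\subseteq\mathrm{supp}(F)]\le p^{|W|}$ for all $W\subseteq\mathcal{W}_{\mathsf{C}}$, where $\mathrm{supp}(F)=\{w:F(w)\not\propto I\}$. $F\bowtie\mathsf{C}$ denotes the noisy execution in which $F(t,j)$ is applied to qubit $j$ right after layer $t$. *)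

(* Defs.v *)
From HB Require Import structures.
From mathcomp Require Import all_boot all_order all_algebra all_field.
From mathcomp Require Import all_classical all_reals all_analysis.
Set Implicit Arguments. Unset Strict Implicit. Unset Printing Implicit Defensive.
Import Order.TTheory GRing.Theory Num.Theory.
Local Open Scope ring_scope.

(* Computational basis states of k qubits. *)
Definition St (k : nat) := {ffun 'I_k -> bool}.
Definition Op (k : nat) := St k -> St k -> algC.

Definition opmul k (A B : Op k) : Op k := fun x y => \sum_(z : St k) A x z * B z y.
Definition opid k : Op k := fun x y => (x == y)%:R.
Arguments opid k : clear implicits.
Definition opadj k (A : Op k) : Op k := fun x y => (A y x)^*.
Definition opscale k (c : algC) (A : Op k) : Op k := fun x y => c * A x y.
Definition op_eq k (A B : Op k) : Prop := forall x y, A x y = B x y.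

(* Single-qubit Paulis in symplectic form (x-bit, z-bit):
   (false,false)=I, (true,false)=X, (true,true)=Y, (false,true)=Z. *)
Definition pauli1 := (bool * bool)%type.
Definition pauliI : pauli1 := (false, false).
Definition pauli1_mx (a : pauli1) : bool -> bool -> algC :=
  fun r c =>
  match a with
  | (false, false) => (r == c)%:R
  | (true, false) => (r != c)%:R
  | (true, true) => (r != c)%:R * (if r then 'i else - 'i)
  | (false, true) => (r == c)%:R * (if r then -1 else 1)
  end.

Definition pauli_op k (a : {ffun 'I_k -> pauli1}) : Op k :=
  fun x y => \prod_(i : 'I_k) pauli1_mx (a i) (x i) (y i).

Definition unitary k (U : Op k) : Prop := op_eq (opmul U (opadj U)) (opid k).

Definition clifford k (U : Op k) : Prop :=
  unitary U /\
  forall a : {ffun 'I_k -> pauli1}, exists (b : {ffun 'I_k -> pauli1}) (c : algC),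
    op_eq (opmul (opmul U (pauli_op a)) (opadj U)) (opscale c (pauli_op b)).

Record gate (n : nat) := Gate {
  g_k : nat;
  g_qubits : 'I_g_k -> 'I_n;
  g_U : Op g_k }.
Arguments g_k {n} g.
Arguments g_qubits {n} g _.
Arguments g_U {n} g _ _.

(* The n-qubit operator of a gate (tensor with identity elsewhere). *)
Definition embed n (g : gate n) : Op n :=
  fun x y =>
    g_U g [ffun i => x (g_qubits g i)] [ffun i => y (g_qubits g i)] *
    [forall l, (l \notin codom (g_qubits g)) ==> (x l == y l)]%:R.

Definition good_gate n (g : gate n) : Prop :=
  (g_k g = 1%N \/ g_k g = 2%N) /\ injective (g_qubits g) /\ clifford (g_U g).

Definition layer n := seq (gate n).

Definition disjoint_gates n (g h : gate n) : bool :=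
  [forall a, forall b, g_qubits g a != g_qubits h b].

Definition good_layer n (L : layer n) : Prop :=
  foldr (fun g P => good_gate g /\ P) True L /\ pairwise (@disjoint_gates n) L.

Definition layer_op n (L : layer n) : Op n := foldr (fun g U => opmul (embed g) U) (opid n) L.

(* A depth-D circuit on n qubits: layers indexed by t : 'I_D (t = 0 is the paper's layer 1). *)
Definition circuit n D := 'I_D -> layer n.

Definition clifford_circuit n D (C : circuit n D) : Prop := forall t, good_layer (C t).

Definition wire n D := ('I_D * 'I_n)%type.
Definition err n D := {ffun wire n D -> pauli1}.

Definition supp n D (f : err n D) : {set wire n D} := [set w | f w != pauliI].

(* Pauli error applied right after layer t. *)
Definition err_layer n D (f : err n D) (t : 'I_D) : Op n :=
  pauli_op [ffun j => f (t, j)].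

(* Noisy execution f ⋈ C: unitary E_{D} L_{D} ... E_1 L_1. *)
Definition noisy n D (C : circuit n D) (f : err n D) : Op n :=
  foldl (fun U t => opmul (opmul (err_layer f t) (layer_op (C t))) U) (opid n) (enum 'I_D).

Definition eq_up_to_phase k (A B : Op k) : Prop := exists c : algC, op_eq A (opscale c B).

Definition is_prob (R : realType) (Omega : finType) (P : Omega -> R) : Prop :=
  (forall w, 0 <= P w) /\ \sum_(w : Omega) P w = 1.

Definition local_stochastic (R : realType) (Omega : finType) (P : Omega -> R)
  n D (F : Omega -> err n D) (p : R) : Prop :=
  forall W : {set wire n D}, \sum_(w : Omega | W \subset supp (F w)) P w <= p ^+ #|W|.

Definition strength' (R : realType) (D : nat) (p : R) : R :=
  D%:R * powR (2 * powR p ((2 : R)^-1 ^+ D.-1)) (D%:R)^-1.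

(* Main.v *)
Require Import Defs.
From HB Require Import structures.
From mathcomp Require Import all_boot all_order all_algebra all_field.
From mathcomp Require Import all_classical all_reals all_analysis.
From mathcomp Require Import ring lra.
Import Order.TTheory GRing.Theory Num.Theory.
Local Open Scope ring_scope.
Set Implicit Arguments. Unset Strict Implicit. Unset Printing Implicit Defensive.

Lemma opE k (A B : Op k) : op_eq A B -> A = B.
Proof. by move=> h; apply: funext => x; apply: funext => y; apply: h. Qed.

Lemma opmulA k (A B C : Op k) : opmul A (opmul B C) = opmul (opmul A B) C.
Proof.
apply: opE => x y; rewrite /opmul.
under eq_bigr => z _ do rewrite big_distrr /=.
rewrite exchange_big /=; apply: eq_bigr => w _.
by rewrite big_distrl /=; apply: eq_bigr => z _; rewrite mulrA.
Qed.

Lemma opmul1 k (A : Op k) : opmul A (opid k) = A.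
Proof.
apply: opE => x y; rewrite /opmul /opid (bigD1 y) //= eqxx mulr1 big1 ?addr0 //.
by move=> z /negbTE ->; rewrite mulr0.
Qed.

Lemma op1mul k (A : Op k) : opmul (opid k) A = A.
Proof.
apply: opE => x y; rewrite /opmul /opid (bigD1 x) //= eqxx mul1r big1 ?addr0 //.
by move=> z; rewrite eq_sym => /negbTE ->; rewrite mul0r.
Qed.

Lemma opmulZl k c (A B : Op k) : opmul (opscale c A) B = opscale c (opmul A B).
Proof. by apply: opE => x y; rewrite /opmul /opscale big_distrr; apply: eq_bigr => z _; rewrite -?mulrA. Qed.

Lemma opmulZr k c (A B : Op k) : opmul A (opscale c B) = opscale c (opmul A B).
Proof. by apply: opE => x y; rewrite /opmul /opscale big_distrr; apply: eq_bigr => z _; rewrite mulrCA. Qed.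

Lemma opscaleA k c d (A : Op k) : opscale c (opscale d A) = opscale (c * d) A.
Proof. by apply: opE => x y; rewrite /opscale mulrA. Qed.

Lemma opscale1 k (A : Op k) : opscale 1 A = A.
Proof. by apply: opE => x y; rewrite /opscale mul1r. Qed.

Definition mxo k (A : Op k) : 'M[algC]_#|St k| :=
  \matrix_(i, j) A (enum_val i) (enum_val j).

Lemma mxo_mul k (A B : Op k) : mxo (opmul A B) = mxo A *m mxo B.
Proof.
apply/matrixP => i j; rewrite !mxE /opmul.
rewrite (reindex (@enum_val (St k) predT)) /=.
  by apply: eq_bigr => l _; rewrite !mxE.
by apply: onW_bij; apply: enum_val_bij.
Qed.

Lemma mxo_id k : mxo (opid k) = 1%:M.
Proof. by apply/matrixP => i j; rewrite !mxE /opid (inj_eq enum_val_inj). Qed.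

Lemma op_inv_comm k (A B : Op k) : opmul A B = opid k -> opmul B A = opid k.
Proof.
move=> h; have h1 : mxo A *m mxo B = 1%:M by rewrite -mxo_mul h mxo_id.
have h2 := mulmx1C h1; rewrite -mxo_mul -mxo_id in h2.
apply: opE => x y.
move/matrixP: h2 => /(_ (enum_rank x) (enum_rank y)).
by rewrite !mxE !enum_rankK.
Qed.

Definition ph1 (a : pauli1) (r : bool) : algC :=
  match a with
  | (true, true) => if r then 'i else - 'i
  | (false, true) => if r then -1 else 1
  | _ => 1 end.

Lemma pauli1_mxE a r c : pauli1_mx a r c = (r == c (+) a.1)%:R * ph1 a r.
Proof. by case: a => [[] []]; case: r; case: c; rewrite /= ?mulr1 ?mul1r ?mul0r. Qed.

Definition flip k (a : {ffun 'I_k -> pauli1}) (x : St k) : St k :=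
  [ffun i => x i (+) (a i).1].
Definition rph k (a : {ffun 'I_k -> pauli1}) (x : St k) : algC :=
  \prod_i ph1 (a i) (x i).

Lemma flipK k a : involutive (@flip k a).
Proof. by move=> x; apply/ffunP => i; rewrite !ffunE; case: (x i); case: (a i).1. Qed.

Lemma flip_eq k a (x y : St k) : (x == flip a y) = (flip a x == y).
Proof. by apply/eqP/eqP => [->|<-]; rewrite flipK. Qed.

Lemma prod_eqb k (x y : St k) : \prod_i ((x i == y i)%:R : algC) = (x == y)%:R.
Proof.
case: (eqVneq x y) => [->|ne]; first by rewrite big1 // => i _; rewrite eqxx.
have [i hi] : exists i, x i != y i.
  apply/existsP; apply: contraNT ne => /existsPn h; apply/eqP/ffunP => i.
  by have := h i; rewrite negbK => /eqP.
by rewrite (bigD1 i) //= (negbTE hi) mul0r.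
Qed.

Lemma pauli_opE k a (x y : St k) : pauli_op a x y = (x == flip a y)%:R * rph a x.
Proof.
rewrite /pauli_op /rph -prod_eqb -big_split /=; apply: eq_bigr => i _.
by rewrite pauli1_mxE ffunE.
Qed.

Lemma mulP_l k a (A : Op k) x y : opmul (pauli_op a) A x y = rph a x * A (flip a x) y.
Proof.
rewrite /opmul (bigD1 (flip a x)) //= big1 ?addr0.
  by rewrite pauli_opE flip_eq eqxx mul1r.
by move=> z hz; rewrite pauli_opE flip_eq eq_sym (negbTE hz) mul0r mul0r.
Qed.

Lemma mulP_r k a (A : Op k) x y : opmul A (pauli_op a) x y = A x (flip a y) * rph a (flip a y).
Proof.
rewrite /opmul (bigD1 (flip a y)) //= big1 ?addr0.
  by rewrite pauli_opE eqxx mul1r.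
by move=> z hz; rewrite pauli_opE (negbTE hz) mul0r mulr0.
Qed.

Definition pmul1 (u v : pauli1) : pauli1 := (u.1 (+) v.1, u.2 (+) v.2).
Definition pm k (a b : {ffun 'I_k -> pauli1}) : {ffun 'I_k -> pauli1} :=
  [ffun i => pmul1 (a i) (b i)].

Definition cc (u v : pauli1) : algC :=
  match u, v with
  | (true, false), (false, true) => - 'i   (* X Z = -i Y *)
  | (false, true), (true, false) => 'i     (* Z X = i Y *)
  | (true, false), (true, true) => 'i      (* X Y = i Z *)
  | (true, true), (true, false) => - 'i    (* Y X = -i Z *)
  | (true, true), (false, true) => 'i      (* Y Z = i X *)
  | (false, true), (true, true) => - 'i    (* Z Y = -i X *)
  | _, _ => 1 end.

Lemma ph1_mul u v r : ph1 u r * ph1 v (r (+) u.1) = cc u v * ph1 (pmul1 u v) r.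
Proof.
case: u => [[] []]; case: v => [[] []]; case: r;
  rewrite /= ?mulr1 ?mul1r ?mulN1r ?mulrN1 ?mulNr ?mulrN ?opprK ?mulCii ?opprK //.
Qed.

Lemma flip_pm k (a b : {ffun 'I_k -> pauli1}) y : flip a (flip b y) = flip (pm a b) y.
Proof. by apply/ffunP => i; rewrite !ffunE /=; case: (y i); case: (a i).1; case: (b i).1. Qed.

Lemma pauli_mul k (a b : {ffun 'I_k -> pauli1}) :
  opmul (pauli_op a) (pauli_op b) = opscale (\prod_i cc (a i) (b i)) (pauli_op (pm a b)).
Proof.
apply: opE => x y; rewrite mulP_l /opscale !pauli_opE.
rewrite [X in X = _]mulrC -mulrA [X in _ = X]mulrCA; congr (_ * _).
  congr (_%:R); congr nat_of_bool; rewrite -flip_pm; apply/eqP/eqP => [h|->]; by rewrite ?flipK -?h ?flipK.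
rewrite /rph -[LHS]big_split -[RHS]big_split /=; apply: eq_bigr => i _.
by rewrite mulrC ffunE ph1_mul ffunE.
Qed.

Lemma pauli_id k : pauli_op [ffun _ : 'I_k => pauliI] = opid k.
Proof.
apply: opE => x y; rewrite pauli_opE /opid /rph big1 ?mulr1; last by move=> i _; rewrite ffunE.
by congr ((_ == _)%:R); apply/ffunP => i; rewrite !ffunE addbF.
Qed.

Lemma cliff_comm k (U : Op k) : clifford U -> forall a',
  exists b' c, opmul U (pauli_op a') = opscale c (opmul (pauli_op b') U) /\
    ((forall u, a' u = pauliI) -> forall u, b' u = pauliI).
Proof.
move=> [hu hc] a'.
have [allI|nI] := boolP [forall u, a' u == pauliI].
  exists a', 1; split; last by move=> _ u; apply/eqP; move/forallP: allI.
  have -> : a' = [ffun _ => pauliI] by apply/ffunP => u; rewrite ffunE; apply/eqP; move/forallP: allI.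
  by rewrite pauli_id opmul1 op1mul opscale1.
have [b [c hbc]] := hc a'.
exists b, c; split; last first.
  by move=> h; move: nI => /forallP []; move=> u; rewrite h.
have hu' : opmul (opadj U) U = opid k by apply: op_inv_comm; apply: opE.
rewrite -[X in X = _]opmul1 -hu' opmulA.
rewrite (opE hbc) opmulZl; congr opscale.
Qed.

Definition ingate n (g : gate n) (j : 'I_n) : bool := j \in codom (g_qubits g).

Definition ext n (g : gate n) (b' : {ffun 'I_(g_k g) -> pauli1}) (a : {ffun 'I_n -> pauli1}) :
  {ffun 'I_n -> pauli1} :=
  [ffun j => if [pick u | g_qubits g u == j] is Some u then b' u else a j].
Arguments ext {n} g b' a.

Lemma ext_q n (g : gate n) b' a u : injective (g_qubits g) -> ext g b' a (g_qubits g u) = b' u.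
Proof.
move=> inj; rewrite ffunE; case: pickP => [v /eqP /inj -> //|].
by move/(_ u); rewrite eqxx.
Qed.

Lemma ext_off n (g : gate n) b' a j : ~~ ingate g j -> ext g b' a j = a j.
Proof.
move=> hj; rewrite ffunE; case: pickP => [v /eqP hv|//].
by move: hj; rewrite /ingate -hv codom_f.
Qed.

Lemma prod_split n k (q : 'I_k -> 'I_n) (h : 'I_n -> algC) : injective q ->
  \prod_l h l = (\prod_u h (q u)) * \prod_(l | l \notin codom q) h l.
Proof.
move=> inj; rewrite (bigID (fun l => l \in codom q)) /=; congr (_ * _).
rewrite (eq_bigl (fun l => l \in [set q u | u in setT])); last first.
  move=> l; apply/codomP/imsetP => [[u ->]|[u _ ->]]; by exists u; rewrite ?in_setT.
rewrite big_imset /=; last by move=> u v _ _; apply: inj.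
by apply: eq_bigl => u; rewrite in_setT.
Qed.

Lemma gate_conj n (g : gate n) (a' b' : {ffun 'I_(g_k g) -> pauli1}) c (a : {ffun 'I_n -> pauli1}) :
  injective (g_qubits g) ->
  opmul (g_U g) (pauli_op a') = opscale c (opmul (pauli_op b') (g_U g)) ->
  (forall u, a (g_qubits g u) = a' u) ->
  opmul (embed g) (pauli_op a) = opscale c (opmul (pauli_op (ext g b' a)) (embed g)).
Proof.
move=> inj hU ha; set b := ext g b' a.
apply: opE => x y; rewrite /opscale mulP_r mulP_l /embed.
set q := g_qubits g.
set rx := [ffun i => x (q i)]; set ry := [ffun i => y (q i)].
have hk := congr1 (fun M => M rx ry) hU; rewrite /= /opscale mulP_r mulP_l in hk.
have e1 : [ffun i => flip a y (q i)] = flip a' ry by apply/ffunP => u; rewrite !ffunE ha.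
have e2 : [ffun i => flip b x (q i)] = flip b' rx.
  by apply/ffunP => u; have := ext_q b' a u inj; rewrite !ffunE => ->.
rewrite e1 e2.
have e3 : [forall l, (l \notin codom q) ==> (x l == flip a y l)] =
          [forall l, (l \notin codom q) ==> (flip b x l == y l)].
  apply: eq_forallb => l; case: (boolP (l \in codom q)) => //= hl.
  have := ext_off b' a hl; rewrite !ffunE => ->.
  by case: (x l); case: (y l); case: (a l).1.
case: (boolP [forall l, (l \notin codom q) ==> (x l == flip a y l)]) => hoff; last first.
  by move: (hoff); rewrite e3 => /negbTE ->; rewrite !mulr0 mul0r.
have hoff2 := hoff; rewrite e3 in hoff2; rewrite hoff2.
have eO : \prod_(l | l \notin codom q) ph1 (a l) (flip a y l) =
          \prod_(l | l \notin codom q) ph1 (b l) (x l).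
  apply: eq_bigr => l hl; rewrite /b ext_off //.
  by have := forallP hoff l; rewrite hl /= => /eqP ->.
have r1 : rph a (flip a y) = rph a' (flip a' ry) *
           \prod_(l | l \notin codom q) ph1 (a l) (flip a y l).
  rewrite /rph (prod_split _ inj); congr (_ * _); apply: eq_bigr => u _.
  by rewrite ha; congr ph1; rewrite -e1 !ffunE.
have r2 : rph b x = rph b' rx * \prod_(l | l \notin codom q) ph1 (b l) (x l).
  by rewrite /rph (prod_split _ inj); congr (_ * _); apply: eq_bigr => u _; rewrite /b /q ext_q // ffunE.
rewrite r1 r2 eO.
transitivity ((g_U g rx (flip a' ry) * rph a' (flip a' ry)) *
   \prod_(l | l \notin codom q) ph1 (b l) (x l)); first by rewrite /=; ring.
rewrite hk /=; ring.
Qed.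

Definition nbr n (L : layer n) (k j : 'I_n) : bool :=
  (k == j) || has (fun g => ingate g k && ingate g j) L.

Lemma has_all_ex T (a b : pred T) (s : seq T) : has a s -> all b s -> exists x, a x && b x.
Proof.
elim: s => [//|x s IH] /= /orP [ha|hs] /andP [hb hall]; first by exists x; rewrite ha hb.
exact: IH.
Qed.

Lemma layer_conj n (L : layer n) : good_layer L -> forall a, exists b c,
  opmul (layer_op L) (pauli_op a) = opscale c (opmul (pauli_op b) (layer_op L)) /\
  forall j, b j != pauliI -> exists k, nbr L k j && (a k != pauliI).
Proof.
elim: L => [|g L IH] hL a.
  exists a, 1; split; first by rewrite /layer_op /= opmul1 op1mul opscale1.
  by move=> j hj; exists j; rewrite /nbr eqxx.
case: hL => [[hg hfold] hp]; move: hp; rewrite /= => /andP [hdisj hpw].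
have [b1 [c1 [h1 s1]]] := IH (conj hfold hpw) a.
case: hg => [_ [inj hcl]].
have [b' [c2 [h2 s2]]] := cliff_comm hcl [ffun u => b1 (g_qubits g u)].
have h3 := gate_conj (a := b1) inj h2 (fun u => esym (ffunE (fun u0 => b1 (g_qubits g u0)) u)).
exists (ext g b' b1), (c1 * c2); split.
  rewrite /layer_op /= -/(layer_op L).
  rewrite -opmulA h1 opmulZr opmulA h3 opmulZl opscaleA -opmulA //.
move=> j hj; case: (boolP (ingate g j)) => hin.
  move/codomP: (hin) => [u hu]; rewrite hu ext_q // in hj.
  case: (boolP [exists u0, b1 (g_qubits g u0) != pauliI]) => [/existsP [u0 hu0]|/existsPn h]; last first.
    exfalso; move: hj; rewrite (s2 _ u) ?eqxx // => v; rewrite ffunE; apply/eqP.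
    by have := h v; rewrite negbK.
  have [k /andP [hk ha]] := s1 _ hu0.
  have ek : k = g_qubits g u0.
    move: hk; rewrite /nbr => /orP [/eqP -> //| hh].
    have [h /andP [/andP [_ hin2] hdj]] := has_all_ex hh hdisj.
    move/codomP: hin2 => [v hv].
    by move: hdj => /forallP /(_ u0) /forallP /(_ v); rewrite hv eqxx.
  exists k; rewrite ha andbT /nbr /=; apply/orP; right; apply/orP; left.
  by rewrite /ingate ek codom_f hu codom_f.
rewrite ext_off // in hj.
have [k /andP [hk ha]] := s1 _ hj.
exists k; rewrite ha andbT; move: hk; rewrite /nbr /= => /orP [->//|->].
by rewrite !orbT.
Qed.

Section Circ.
Variables (n D : nat) (C : circuit n D).

Definition nzp (f : err n D) (m : nat) : Op n :=
  foldl (fun U t => opmul (opmul (err_layer f t) (layer_op (C t))) U) (opid n) (take m (enum 'I_D)).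

Definition f0 : err n D := [ffun _ => pauliI].

Fixpoint lc (t : ordinal D) (m : nat) (i j : ordinal n) {struct m} : bool :=
  if m is m'.+1 then
    if (t < m')%N && (m' < D)%N then [exists k, lc t m' i k && nbr (C (insubd t m')) k j]
    else lc t m' i j
  else i == j.

Lemma lc_id (t : 'I_D) m i j : (m <= t.+1)%N -> lc t m i j = (i == j).
Proof.
elim: m => //= m IH hm; rewrite (IH (ltnW hm)).
have hmt : (m <= t)%N by [].
by rewrite ltnNge hmt.
Qed.

Lemma err_layer0 t : err_layer f0 t = opid n.
Proof.
rewrite /err_layer -pauli_id; congr pauli_op; by apply/ffunP => j; rewrite !ffunE.
Qed.

Hypothesis HC : clifford_circuit C.

Lemma nzp_inv f m : (m <= D)%N -> exists b c,
  nzp f m = opscale c (opmul (pauli_op b) (nzp f0 m)) /\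
  forall j, b j != pauliI -> exists s : wire n D,
    [&& f s != pauliI, (s.1 < m)%N & lc s.1 m s.2 j].
Proof.
elim: m => [|m IH] hm.
  exists [ffun _ => pauliI], 1; split.
    by rewrite /nzp !take0 /= pauli_id op1mul opscale1.
  by move=> j; rewrite ffunE eqxx.
have hmD : (m < D)%N := hm.
pose t := Ordinal hmD.
have ht : take m.+1 (enum 'I_D) = rcons (take m (enum 'I_D)) t.
  by rewrite (take_nth t) ?size_enum_ord //; congr rcons; exact: (nth_ord_enum t t).
have [b [c [h1 s1]]] := IH (ltnW hm).
have [b2 [c2 [h2 s2]]] := layer_conj (HC t) b.
pose e := [ffun j => f (t, j)].
have h3 := pauli_mul e b2.
exists (pm e b2), (c * (c2 * \prod_i cc (e i) (b2 i))); split.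
  rewrite /nzp ht !foldl_rcons -!/(nzp _ m) h1 err_layer0 op1mul.
  have hA : opmul (opmul (pauli_op e) (layer_op (C t))) (pauli_op b) =
            opscale (c2 * \prod_i cc (e i) (b2 i)) (opmul (pauli_op (pm e b2)) (layer_op (C t))).
    by rewrite -opmulA h2 opmulZr opmulA h3 opmulZl opscaleA.
  by rewrite /err_layer -/e opmulZr opmulA hA opmulZl opscaleA -opmulA.
move=> j; rewrite ffunE => hj.
case: (eqVneq (e j) pauliI) => hej.
  have hb2 : b2 j != pauliI by move: hj; rewrite hej; case: (b2 j).
  have [k /andP [hk hbk]] := s2 _ hb2.
  have [s /and3P [hf hs hl]] := s1 _ hbk.
  exists s; rewrite hf ltnS (ltnW hs) /= hs hmD /=.
  apply/existsP; exists k; rewrite hl /=.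
  have -> : insubd s.1 m = t by apply: val_inj; rewrite /= insubdK.
  exact: hk.
exists (t, j); apply/and3P; split => //=; first by move: hej; rewrite ffunE.
have -> : (t < m)%N = false by rewrite /= ltnn.
by rewrite /= lc_id ?eqxx.
Qed.


Lemma noisy_nzp f : noisy C f = nzp f D.
Proof. by rewrite /noisy /nzp take_oversize // size_enum_ord. Qed.

Lemma det f : exists f' : err n D,
  (forall w, w \in supp f' -> (val w.1).+1 = D) /\
  eq_up_to_phase (noisy C f) (noisy C f') /\
  (forall w, w \in supp f' -> exists s, (s \in supp f) && lc s.1 D s.2 w.2).
Proof.
case: (posnP D) => [D0|Dpos].
  exists f; split; [|split].
  - by move=> [[t ht] j]; exfalso; move: (ht); rewrite D0.
  - by exists 1; move=> x y; rewrite /opscale mul1r.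
  - by move=> [[t ht] j]; exfalso; move: (ht); rewrite D0.
have [b [c [h1 s1]]] := nzp_inv f (leqnn D).
have hD1 : (D.-1 < D)%N by rewrite ltn_predL.
pose tl := Ordinal hD1.
pose f' : err n D := [ffun w : wire n D => if (val w.1).+1 == D then b w.2 else pauliI].
exists f'; split; [|split].
- move=> w; rewrite inE ffunE; case: ifP => [/eqP -> //|_]; by rewrite eqxx.
- exists c; move=> x y.
  have htk : take D (enum 'I_D) = rcons (take D.-1 (enum 'I_D)) tl.
    rewrite -[in RHS](nth_ord_enum tl tl) -take_nth ?size_enum_ord //.
    by rewrite prednK.
  have e1 : nzp f' D.-1 = nzp f0 D.-1.
    rewrite /nzp; set s := take D.-1 _.
    have : forall t, t \in s -> (t < D.-1)%N.
      move=> t ht; have := map_f val ht.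
      rewrite map_take val_enum_ord take_iota mem_iota add0n => /andP [_].
      by move/leq_trans; apply; apply: geq_minl.
    elim/last_ind: s => [//|s t IH] hs.
    rewrite !foldl_rcons IH; last by move=> u hu; apply: hs; rewrite mem_rcons inE hu orbT.
    congr opmul; congr opmul; rewrite /err_layer; congr pauli_op; apply/ffunP => j.
    rewrite !ffunE /=; have := hs t; rewrite mem_rcons inE eqxx => /(_ isT) htl.
    case: eqP => // htD; exfalso; move: htl htD; move: (nat_of_ord t) => v hv hvD.
    by rewrite -hvD /= ltnn in hv.
  have e2 : nzp f' D = opmul (pauli_op b) (nzp f0 D).
    rewrite /nzp htk !foldl_rcons -!/(nzp _ D.-1) e1 err_layer0 op1mul opmulA.
    congr (opmul (opmul _ _) _); rewrite /err_layer; congr pauli_op.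
    by apply/ffunP => j; rewrite !ffunE /= prednK // eqxx.
  by rewrite !noisy_nzp h1 e2.
- move=> w; rewrite inE ffunE; case: ifP => [_ hb|]; last by rewrite eqxx.
  have [s /and3P [hf _ hl]] := s1 _ hb.
  by exists s; rewrite inE hf hl.
Qed.

End Circ.

Section Q6nat.
Local Open Scope nat_scope.

Lemma card_exists (T T' : finType) (S : {pred T}) (B : {set T'}) (R : T -> T' -> bool) M :
  (forall i, i \in S -> exists k, (k \in B) && R i k) ->
  (forall k, k \in B -> #|[set i | R i k]| <= M) ->
  #|S| <= #|B| * M.
Proof.
move=> hS hB.
rewrite -sum1_card.
apply: (@leq_trans (\sum_(i in S) \sum_(k in B) R i k)).
  apply: leq_sum => i /hS [k /andP [hk hr]].
  by rewrite (bigD1 k) //= hr leq_addr.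
apply: (@leq_trans (\sum_i \sum_(k in B) R i k)).
  by rewrite [X in _ <= X](bigID (mem S)) /= leq_addr.
rewrite exchange_big /= -sum_nat_const; apply: leq_sum => k hk.
apply: leq_trans (hB k hk); rewrite -big_mkcond /= sum1_card.
by apply: eq_leq; apply: eq_card => i; rewrite inE.
Qed.

Lemma nbr_sym n (L : layer n) k j : nbr L k j = nbr L j k.
Proof. by rewrite /nbr eq_sym; congr orb; apply: eq_has => g; rewrite andbC. Qed.

Lemma nbr_card n (L : layer n) k : good_layer L -> #|[set j | nbr L k j]| <= 2.
Proof.
elim: L => [|g L IH] hL.
  apply: (@leq_trans #|[set k]|); last by rewrite cards1.
  by apply: subset_leq_card; apply/fintype.subsetP => j; rewrite !inE /nbr /= orbF eq_sym.
case: hL => [[hg hfold] hp]; move: hp; rewrite /= => /andP [hdisj hpw].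
case: (boolP (ingate g k)) => hk; last first.
  apply: leq_trans (IH (conj hfold hpw)); apply: subset_leq_card; apply/fintype.subsetP => j.
  by rewrite !inE /nbr /= (negbTE hk).
case: hg => [hk2 [inj _]].
apply: (@leq_trans #|[set j | ingate g j]|).
  apply: subset_leq_card; apply/fintype.subsetP => j; rewrite !inE /nbr /=.
  case/orP => [/eqP <- //|/orP [/andP [_ ->] //|hh]].
  have [h /andP [/andP [hin2 _] hdj]] := has_all_ex hh hdisj.
  move/codomP: hk => [u hu]; move/codomP: hin2 => [v hv].
  by move: hdj => /forallP /(_ u) /forallP /(_ v); rewrite -hu hv eqxx.
have -> : #|[set j | ingate g j]| = #|codom (g_qubits g)|.
  by apply: eq_card => j; rewrite inE.
by rewrite card_codom // card_ord; case: hk2 => ->.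
Qed.

Section Cones.
Variables (n D : nat) (C : circuit n D).
Hypothesis HC : clifford_circuit C.

Lemma lc_fw (t : 'I_D) i m : #|[set j | lc C t m i j]| <= 2 ^ (m - t.+1).
Proof.
elim: m => [|m IH].
  apply: (@leq_trans #|[set i]|); last by rewrite cards1.
  by apply: subset_leq_card; apply/fintype.subsetP => j; rewrite !inE eq_sym.
case: (boolP ((t < m) && (m < D))) => hc; last first.
  have -> : [set j | lc C t m.+1 i j] = [set j | lc C t m i j].
    by apply/setP => j; rewrite !inE /= (negbTE hc).
  apply: (leq_trans IH); apply: leq_pexp2l => //; exact: leq_sub2r.
have -> : [set j | lc C t m.+1 i j] = [set j | [exists k, lc C t m i k && nbr (C (insubd t m)) k j]].
  by apply/setP => j; rewrite !inE /= hc.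
case/andP: hc => htm hmD.
rewrite subSS -(subnSK htm) expnS mulnC.
apply: (leq_trans (card_exists (B := [set k | lc C t m i k]) (R := fun j k => nbr (C (insubd t m)) k j) (M := 2) _ _)).
- by move=> j; rewrite inE => /existsP [k hk]; exists k; rewrite inE.
- by move=> k _; apply: nbr_card.
- by rewrite leq_mul2r IH orbT.
Qed.

Lemma lc_bw (t : 'I_D) m : forall j, #|[set i | lc C t m i j]| <= 2 ^ (m - t.+1).
Proof.
elim: m => [|m IH] j.
  apply: (@leq_trans #|[set j]|); last by rewrite cards1.
  by apply: subset_leq_card; apply/fintype.subsetP => i; rewrite !inE.
case: (boolP ((t < m) && (m < D))) => hc; last first.
  have -> : [set i | lc C t m.+1 i j] = [set i | lc C t m i j].
    by apply/setP => i; rewrite !inE /= (negbTE hc).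
  apply: (leq_trans (IH j)); apply: leq_pexp2l => //; exact: leq_sub2r.
have -> : [set i | lc C t m.+1 i j] = [set i | [exists k, lc C t m i k && nbr (C (insubd t m)) k j]].
  by apply/setP => i; rewrite !inE /= hc.
case/andP: hc => htm hmD.
rewrite subSS -(subnSK htm) expnS.
apply: (leq_trans (card_exists (B := [set k | nbr (C (insubd t m)) k j]) (R := fun i k => lc C t m i k) (M := 2 ^ (m - t.+1)) _ _)).
- by move=> i; rewrite inE => /existsP [k /andP [hk hn]]; exists k; rewrite inE hk hn.
- by move=> k _; apply: IH.
- rewrite leq_mul2r; apply/orP; right.
  have -> : [set k | nbr (C (insubd t m)) k j] = [set k | nbr (C (insubd t m)) j k].
    by apply/setP => k; rewrite !inE nbr_sym.
  exact: nbr_card.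
Qed.

Lemma exp_le (t : 'I_D) : 2 ^ (D - t.+1) <= 2 ^ D.-1.
Proof. by apply: leq_pexp2l => //; rewrite -subn1; apply: leq_sub2l. Qed.

Lemma bw_wire j : #|[set s : wire n D | lc C s.1 D s.2 j]| <= D * 2 ^ D.-1.
Proof.
apply: (@leq_trans (#|[set: 'I_D]| * 2 ^ D.-1)); last by rewrite cardsT card_ord.
apply: (card_exists (R := fun s t => (s.1 == t) && lc C t D s.2 j)).
  by move=> s; rewrite inE => hs; exists s.1; rewrite finset.in_setT eqxx hs.
move=> t _.
apply: (@leq_trans #|[set (t, i) | i in [set i | lc C t D i j]]|).
  apply: subset_leq_card; apply/fintype.subsetP => s; rewrite inE => /andP [/eqP <- hl].
  by apply/imsetP; exists s.2; rewrite ?inE //; case: s {hl}.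
apply: (leq_trans (leq_imset_card _ _)).
exact: (leq_trans (lc_bw _ _ _) (exp_le t)).
Qed.

Lemma fw_wire (s : wire n D) :
  #|[set w : wire n D | ((val w.1).+1 == D) && lc C s.1 D s.2 w.2]| <= 2 ^ D.-1.
Proof.
set A := [set w : wire n D | _].
have inj : {in A &, injective (fun w : wire n D => w.2)}.
  move=> [t1 j1] [t2 j2]; rewrite !inE /= => /andP [/eqP h1 _] /andP [/eqP h2 _] ->.
  by congr pair; apply: val_inj; apply: succn_inj; rewrite h1 h2.
rewrite -(card_in_imset inj).
apply: (@leq_trans #|[set j | lc C s.1 D s.2 j]|); last first.
  exact: (leq_trans (lc_fw _ _ _) (exp_le s.1)).
apply: subset_leq_card; apply/fintype.subsetP => j /imsetP [w hw ->]; move: hw.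
by rewrite /A !inE => /andP [_ hl].
Qed.

End Cones.

End Q6nat.

Section Real.
Variable R : realType.

Lemma qK (D : nat) (p : R) : 0 <= p ->
  (powR p ((2 : R)^-1 ^+ D.-1)) ^+ (2 ^ D.-1)%N = p.
Proof.
move=> hp; rewrite -powR_mulrn ?powR_ge0 // -powRrM natrX exprVn mulVf ?powRr1 //.
Qed.

Lemma strength_ge0 (D : nat) (p : R) : 0 <= strength' D p.
Proof. by rewrite /strength' mulr_ge0 ?ler0n ?powR_ge0. Qed.

Lemma strength_bound (D : nat) (p : R) : 0 <= p -> (0 < D)%N ->
  strength' D p < 1 ->
  (D * 2 ^ D.-1)%N%:R * powR p ((2 : R)^-1 ^+ D.-1) <= strength' D p /\
  powR p ((2 : R)^-1 ^+ D.-1) <= 1.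
Proof.
move=> hp Dpos.
set q := powR p _; set y := powR (2 * q) (D%:R^-1).
have q0 : 0 <= q by apply: powR_ge0.
have y0 : 0 <= y by apply: powR_ge0.
have hD : (D%:R : R) != 0 by rewrite pnatr_eq0 -lt0n.
have yD : y ^+ D = 2 * q.
  rewrite -powR_mulrn // -powRrM mulVf // powRr1 //; lra.
have yD' : y ^+ D = y * y ^+ D.-1 by rewrite -exprS prednK.
have hq : q = y * y ^+ D.-1 / 2 by rewrite -yD' yD; field.
rewrite /strength' -/q -/y => hlt.
have D1 : (1 : R) <= D%:R by rewrite ler1n.
have y1 : y < 1.
  by apply: (le_lt_trans _ hlt); apply: ler_peMl.
have h2y : (2 * y) ^+ D.-1 <= 1.
  case: (ltngtP D 1) => [h|hD2|->]; [by exfalso; move: h; rewrite ltnS leqn0 => /eqP D0; rewrite D0 in Dpos | |by rewrite expr0].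
  apply: exprn_ile1; first lra.
  have : (2 : R) <= D%:R by rewrite ler_nat.
  move=> h2; have : 2 * y <= D%:R * y by apply: ler_wpM2r.
  lra.
have hB : (D * 2 ^ D.-1)%N%:R * q = D%:R * y * ((2 * y) ^+ D.-1 / 2).
  by rewrite hq natrM natrX exprMn; field.
have main : (D * 2 ^ D.-1)%N%:R * q <= D%:R * y.
  rewrite hB; rewrite -[X in _ <= X]mulr1; apply: ler_wpM2l.
    by rewrite mulr_ge0 ?ler0n.
  have : 0 <= (2 * y) ^+ D.-1 by rewrite exprn_ge0 // mulr_ge0.
  lra.
split => //.
have B1 : (1 : R) <= (D * 2 ^ D.-1)%N%:R by rewrite ler1n muln_gt0 Dpos expn_gt0.
have : q <= (D * 2 ^ D.-1)%N%:R * q by apply: ler_peMl.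
lra.
Qed.

End Real.

Section Prob.
Variables (R : realType) (Omega : finType) (P : Omega -> R).
Hypothesis HP : is_prob P.

Lemma sum_le1 (b : pred Omega) : \sum_(om | b om) P om <= 1.
Proof.
case: HP => h0 h1; rewrite -h1 [X in _ <= X](bigID b) /= lerDl.
by apply: sumr_ge0 => om _; apply: h0.
Qed.

Lemma sum_ind (b : pred Omega) : \sum_(om | b om) P om = \sum_om P om * (b om)%:R.
Proof. by rewrite big_mkcond /=; apply: eq_bigr => om _; case: (b om); rewrite ?mulr1 ?mulr0. Qed.

Variables (T : finType) (Fs Gs : Omega -> {set T}) (p : R).
Hypothesis HF : forall W : {set T}, \sum_(om | W \subset Fs om) P om <= p ^+ #|W|.

Lemma prob_bound (bw fw : T -> {set T}) (B K : nat) (q : R) (W : {set T}) :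
  (forall om w, w \in W -> w \in Gs om -> exists s, (s \in Fs om) && (s \in bw w)) ->
  (forall w s, w \in W -> s \in bw w -> w \in fw s) ->
  (forall w, (#|bw w| <= B)%N) -> (forall s, (#|fw s| <= K)%N) ->
  0 <= q -> q <= 1 -> q ^+ K = p ->
  \sum_(om | W \subset Gs om) P om <= (B%:R * q) ^+ #|W|.
Proof.
move=> hG hfw hB hK q0 q1 qK.
case: (set_0Vmem W) => [->|[s0 hs0]].
  by rewrite cards0 expr0; apply: sum_le1.
case: HP => P0 P1.
rewrite sum_ind.
apply: (@le_trans _ _ (\sum_om P om * \prod_(w in W) \sum_(s in bw w) ((s \in Fs om)%:R : R))).
  apply: ler_sum => om _; apply: ler_wpM2l; first exact: P0.
  case: (boolP (W \subset Gs om)) => hW /=; last first.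
    by apply: prodr_ge0 => w _; apply: sumr_ge0 => s _; apply: ler0n.
  apply: (big_ind (fun x : R => 1 <= x)) => //; first by move=> x y; apply: mulr_ege1.
  move=> w hw; have [s /andP [hsF hsb]] := hG om w hw (fintype.subsetP hW w hw).
  rewrite (bigD1 s) //= hsF lerDl.
  by apply: sumr_ge0 => s' _; apply: ler0n.
under eq_bigr => om _ do rewrite (big_distr_big_dep s0) /= big_distrr /=.
rewrite exchange_big /=.
set PF := pfamily _ _ _.
apply: (@le_trans _ _ (\sum_(f in PF) q ^+ #|W|)).
  apply: ler_sum => f hf.
  have e : forall om, \prod_(w in W) ((f w \in Fs om)%:R : R) = ((f @: W) \subset Fs om)%:R.
    move=> om; case: (boolP (f @: W \subset Fs om)) => hs.
      by rewrite big1 // => w hw; rewrite (fintype.subsetP hs) ?imset_f.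
    move/fintype.subsetPn: hs => [x /imsetP [w hw ->] hx].
    by rewrite (bigD1 w) //= (negbTE hx) mul0r.
  under eq_bigr => om _ do rewrite e.
  rewrite -sum_ind; apply: (le_trans (HF _)).
  rewrite -qK -exprM; apply: ler_wiXn2l => //.
  move/pfamilyP: hf => [_ hf].
  rewrite mulnC; apply: (card_exists (B := f @: W) (R := fun w s => w \in fw s)).
    move=> w hw; exists (f w); rewrite imset_f //=; apply: hfw => //.
    exact: hf.
  move=> s _; apply: leq_trans (hK s); apply: eq_leq; apply: eq_card => w; by rewrite inE.
rewrite sumr_const exprMn -natrX -[X in X <= _]mulr_natl; apply: ler_wpM2r; first exact: exprn_ge0.
rewrite ler_nat card_pfamily foldrE big_map big_enum /=.
rewrite -prod_nat_const; apply: leq_prod => w _; exact: hB.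
Qed.

End Prob.

Unset Implicit Arguments.
Local Open Scope ring_scope.
Theorem lemma5p1p2 (R : realType) (n D : nat) (C : circuit n D)
  (HC : clifford_circuit C)
  (Omega : finType) (P : Omega -> R) (HP : is_prob P)
  (F : Omega -> err n D) (p : R) (hp : 0 <= p)
  (HF : local_stochastic P F p) :
  exists F' : Omega -> err n D,
    local_stochastic P F' (strength' D p) /\
    (forall (om : Omega) (w : wire n D), w \in supp (F' om) -> (val w.1).+1 = D) /\
    (forall om : Omega, eq_up_to_phase (noisy C (F om)) (noisy C (F' om))).
Proof.
have [G hG] := choice (fun om => det HC (F om)).
exists G; split; last split.
- move=> W.
  case: (boolP [forall w in W, (val w.1).+1 == D]) => hWl; last first.
    move/forall_inPn: hWl => [w hw hwD].
    rewrite big1; first exact: exprn_ge0 (strength_ge0 _ _).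
    move=> om hsub; exfalso; move/negP: hwD; apply; apply/eqP.
    by case: (hG om) => h _; apply: h; exact: (fintype.subsetP hsub w hw).
  case: (set_0Vmem W) => [->|[w0 hw0]].
    by rewrite cards0 expr0 sum_le1.
  have Dpos : (0 < D)%N := leq_ltn_trans (leq0n _) (ltn_ord w0.1).
  case: (lerP 1 (strength' D p)) => hp'.
    by apply: (le_trans (sum_le1 HP _)); exact: exprn_ege1.
  have [hB hq1] := strength_bound hp Dpos hp'.
  apply: (le_trans (prob_bound HP (Fs := fun om => supp (F om)) (Gs := fun om => supp (G om)) HF
     (bw := fun w => [set s : wire n D | lc C s.1 D s.2 w.2])
     (fw := fun s => [set w : wire n D | ((val w.1).+1 == D) && lc C s.1 D s.2 w.2])
     (B := (D * 2 ^ D.-1)%N) (K := (2 ^ D.-1)%N) _ _ _ _ _ hq1 (qK _ hp))).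
  + move=> om w hw hwG; case: (hG om) => _ [_ h3]; have [s /andP [h1 h2]] := h3 w hwG.
    by exists s; rewrite h1 inE h2.
  + move=> w s hw; rewrite !inE => hl; by rewrite (forall_inP hWl w hw) hl.
  + by move=> w; apply: bw_wire.
  + by move=> s; apply: fw_wire.
  + exact: powR_ge0.
  + apply: lerXn2r => //; rewrite nnegrE ?strength_ge0 //.
    by rewrite mulr_ge0 ?ler0n ?powR_ge0.
- by move=> om w hw; case: (hG om) => h _; exact: h w hw.
- by move=> om; case: (hG om) => _ [].
Qed.
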